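(* Let $\Lambda\ge2$ be an integer, let $q\in\mathbb C$ satisfy $|q-1|>1$, and set $t_0=1/(1-q)$, $\rho=|t_0|$. Suppose real numbers $r_1,\dots,r_{\Lambda-1}$ satisfy $\rho^2\le r_1\le r_2\le\cdots\le r_{\Lambda-1}\le\rho$ and, for $2\le s\le\Lambda-1$, $$r_s\ \ge\ \max\{|t_e\|_q t_f| : t_e\in D(r_k),\ t_f\in D(r_\ell),\ k,\ell\ge1,\ k+\ell=s\}.$$ Define $S_i=\{t_0\}\cup D(r_i)$ for $1\le i\le\Lambda-1$. Then $S_1\subseteq\cdots\subseteq S_{\Lambda-1}$ and: (1) $\{t t': t\in S_k,\ t'\in S_\ell\}\subseteq S_{\min(k,\ell)}$ for all $k,\ell\in\{1,\dots,\Lambda-1\}$; (2) for $k,\ell\ge1$ with $k+\ell\le\Lambda-1$ and all $t\in S_k$, $t'\in S_\ell$: $1+(q-1)tt'\ne0$ and $t\|_q t'\in S_{k+\ell}$; (3') $1\notin S_{\Lambda-1}$; (4) for $k,\ell\ge1$ with $k+\ell=\Lambda$ and all $t\in S_k$, $t'\in S_\ell$: $1+(q-1)tt'\ne0$.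
   Context: $D(r)=\{t\in\mathbb C:|t|\le r\}$. For $t,t'\in\mathbb C$ with $1+(q-1)tt'\ne0$, the parallel connection of transmissivities is $t\|_q t'=\dfrac{t+t'+(q-2)tt'}{1+(q-1)tt'}$ (this is always defined for $t,t'\in D(\rho)$ since $|q-1||tt'|\le\rho<1$). *)

(* Defs.v *)
(* Complex numbers are rendered as an arbitrary
   numClosedFieldType C (of which the complex numbers are the model). *)
From HB Require Import structures.
From mathcomp Require Import all_boot all_order all_algebra.
Set Implicit Arguments. Unset Strict Implicit. Unset Printing Implicit Defensive.
Import Order.TTheory GRing.Theory Num.Theory.
Local Open Scope ring_scope.

Definition inD (C : numClosedFieldType) (r t : C) : bool := `|t| <= r.

Definition par (C : numClosedFieldType) (q t t' : C) : C :=
  (t + t' + (q - 2) * t * t') / (1 + (q - 1) * t * t').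

Definition t0 (C : numClosedFieldType) (q : C) : C := 1 / (1 - q).

Definition inS (C : numClosedFieldType) (q : C) (r : nat -> C) (i : nat) (t : C) : bool :=
  (t == t0 q) || inD (r i) t.

(* Main.v *)
Require Import Defs.
From HB Require Import structures.
From mathcomp Require Import all_boot all_order all_algebra.
From mathcomp Require Import ring zify.
Import Order.TTheory GRing.Theory Num.Theory.
Local Open Scope ring_scope.

Lemma lt1_addne (C : numClosedFieldType) (x : C) : `|x| < 1 -> 1 + x != 0.
Proof.
move=> h; apply/eqP=> e.
have : x = -1 by rewrite -(subr0 x) -e; ring.
by move=> ex; move: h; rewrite ex normrN normr1 ltxx.
Qed.

Lemma lt1_subne (C : numClosedFieldType) (x : C) : `|x| < 1 -> 1 - x != 0.
Proof. by move=> h; apply: lt1_addne; rewrite normrN. Qed.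

Lemma par_t0l (C : numClosedFieldType) (q t : C) :
  1 - q != 0 -> 1 - t != 0 -> par q (t0 q) t = t0 q.
Proof.
move=> hq ht; rewrite /par /t0.
have -> : 1 + (q - 1) * (1 / (1 - q)) * t = 1 - t by field.
have -> : 1 / (1 - q) + t + (q - 2) * (1 / (1 - q)) * t = (1 / (1 - q)) * (1 - t)
  by field.
by rewrite mulfK.
Qed.

Lemma par_t0r (C : numClosedFieldType) (q t : C) :
  1 - q != 0 -> 1 - t != 0 -> par q t (t0 q) = t0 q.
Proof.
move=> hq ht; rewrite -[RHS](@par_t0l _ q t hq ht) /par.
congr (_ / _); ring.
Qed.

Theorem proposition5p2 (C : numClosedFieldType) (Lam : nat) (q : C)
  (r : nat -> C)
  (hLam : (2 <= Lam)%N)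
  (hq : 1 < `|q - 1|)
  (hr1 : `|t0 q| ^+ 2 <= r 1%N)
  (hrmono : forall i : nat, (1 <= i)%N -> (i.+1 <= Lam - 1)%N -> r i <= r i.+1)
  (hrlast : r (Lam - 1)%N <= `|t0 q|)
  (hrpar : forall s k l : nat, (2 <= s)%N -> (s <= Lam - 1)%N ->
     (1 <= k)%N -> (1 <= l)%N -> (k + l)%N = s ->
     forall te tf : C, inD (r k) te -> inD (r l) tf ->
       `|par q te tf| <= r s) :
  (forall i : nat, (1 <= i)%N -> (i.+1 <= Lam - 1)%N ->
     forall t : C, inS q r i t -> inS q r i.+1 t)
  /\ (forall k l : nat, (1 <= k)%N -> (k <= Lam - 1)%N ->
        (1 <= l)%N -> (l <= Lam - 1)%N ->
        forall t t' : C, inS q r k t -> inS q r l t' ->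
          inS q r (minn k l) (t * t'))
  /\ (forall k l : nat, (1 <= k)%N -> (1 <= l)%N -> (k + l <= Lam - 1)%N ->
        forall t t' : C, inS q r k t -> inS q r l t' ->
          1 + (q - 1) * t * t' != 0 /\ inS q r (k + l)%N (par q t t'))
  /\ ~~ inS q r (Lam - 1)%N 1
  /\ (forall k l : nat, (1 <= k)%N -> (1 <= l)%N -> (k + l)%N = Lam ->
        forall t t' : C, inS q r k t -> inS q r l t' ->
          1 + (q - 1) * t * t' != 0).
Proof.
set a := `|q - 1|; set rho := `|t0 q|.
have a0 : 0 < a by apply: lt_trans hq.
have hq0 : 1 - q != 0.
  by rewrite -normr_gt0 distrC; apply: lt_trans hq.
have hrho : rho = a^-1 by rewrite /rho /t0 div1r normfV distrC.
have rho1 : rho < 1 by rewrite hrho invf_lt1.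
have rho0 : 0 <= rho by rewrite normr_ge0.
have arho : a * rho = 1 by rewrite hrho mulfV // gt_eqF.
have mono : forall i j, (1 <= i)%N -> (i <= j)%N -> (j <= Lam - 1)%N -> r i <= r j.
  move=> i j hi; elim: j => [|j IH] hij hj; first by move: hi hij; case: i.
  move: hij; rewrite leq_eqVlt => /orP [/eqP -> //| hij].
  apply: le_trans (IH hij (ltnW hj)) (hrmono _ _ hj).
  by apply: leq_trans hi hij.
have rb : forall m, (1 <= m)%N -> (m <= Lam - 1)%N -> rho ^+ 2 <= r m /\ r m <= rho.
  move=> m h1 h2; split; first exact: le_trans hr1 (mono _ _ (leqnn 1) h1 h2).
  by apply: le_trans hrlast; apply: mono.
have rho2 : rho ^+ 2 <= rho.
  by rewrite expr2 ler_piMl // ltW.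
have r0 : forall m, (1 <= m)%N -> (m <= Lam - 1)%N -> 0 <= r m.
  by move=> m h1 h2; apply: le_trans (rb m h1 h2).1; rewrite exprn_ge0.
have t0ne1 : t0 q != 1.
  apply/eqP=> e; move: hq; rewrite /a.
  have : q = 0.
    move: e; rewrite /t0 div1r => /(congr1 GRing.inv); rewrite invrK invr1.
    move=> e; have -> : q = 1 - (1 - q) by ring.
    by rewrite e subrr.
  by move=> ->; rewrite sub0r normrN normr1 ltxx.
have t0lt : `|t0 q| < 1 by [].
have Slt1 : forall m t, (1 <= m)%N -> (m <= Lam - 1)%N -> inS q r m t -> `|t| < 1.
  move=> m t h1 h2 /orP [/eqP -> //| ht].
  by apply: le_lt_trans rho1; apply: le_trans ht (rb m h1 h2).2.
have Ssub : forall m t, (1 <= m)%N -> (m <= Lam - 1)%N -> inS q r m t -> 1 - t != 0.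
  by move=> m t h1 h2 h; apply: lt1_subne; apply: Slt1 h.
have DD : forall k l t t', (1 <= k)%N -> (k <= Lam - 1)%N -> (1 <= l)%N -> (l <= Lam - 1)%N ->
    inD (r k) t -> inD (r l) t' -> `|(q - 1) * t * t'| < 1.
  move=> k l t t' h1 h2 h3 h4 ht ht'.
  rewrite !normrM -/a -mulrA.
  apply: le_lt_trans rho1.
  have -> : rho = a * (rho * rho) by rewrite mulrA arho mul1r.
  apply: ler_wpM2l; first exact: ltW.
  apply: ler_pM; rewrite ?normr_ge0 //.
    by apply: le_trans ht (rb _ h1 h2).2.
  by apply: le_trans ht' (rb _ h3 h4).2.
have den : forall k l t t', (1 <= k)%N -> (k <= Lam - 1)%N -> (1 <= l)%N -> (l <= Lam - 1)%N ->
    inS q r k t -> inS q r l t' -> 1 + (q - 1) * t * t' != 0.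
  move=> k l t t' h1 h2 h3 h4 /orP [/eqP ->|ht] /orP [/eqP ->|ht'].
  - have -> : 1 + (q - 1) * t0 q * t0 q = 1 - t0 q by rewrite /t0; field.
    by apply: lt1_subne.
  - have -> : 1 + (q - 1) * t0 q * t' = 1 - t' by rewrite /t0; field.
    by apply: (Ssub l) => //; rewrite /inS ht' orbT.
  - have -> : 1 + (q - 1) * t * t0 q = 1 - t by rewrite /t0; field.
    by apply: (Ssub k) => //; rewrite /inS ht orbT.
  - by apply: lt1_addne; apply: (DD k l).
split.
  move=> i h1 h2 t /orP [/eqP ->|ht]; first by rewrite /inS eqxx.
  apply/orP; right.
  by apply: le_trans ht (hrmono _ h1 h2).
split.
  move=> k l h1 h2 h3 h4 t t' ht ht'.
  have hm1 : (1 <= minn k l)%N by rewrite leq_min h1 h3.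
  have hm2 : (minn k l <= Lam - 1)%N by apply: leq_trans (geq_minl _ _) h2.
  apply/orP; right; rewrite /inD normrM.
  apply: le_trans (rb _ hm1 hm2).1.
  move: ht ht' => /orP [/eqP ->|ht] /orP [/eqP ->|ht'].
  - by rewrite expr2.
  - rewrite expr2; apply: ler_wpM2l => //; apply: le_trans ht' (rb _ h3 h4).2.
  - rewrite expr2; apply: ler_pM; rewrite ?normr_ge0 //.
    by apply: le_trans ht (rb _ h1 h2).2.
  - rewrite expr2; apply: ler_pM; rewrite ?normr_ge0 //.
    + by apply: le_trans ht (rb _ h1 h2).2.
    + by apply: le_trans ht' (rb _ h3 h4).2.
split.
  move=> k l h1 h3 hkl t t' ht ht'.
  have h2 : (k <= Lam - 1)%N by apply: leq_trans hkl; apply: leq_addr.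
  have h4 : (l <= Lam - 1)%N by apply: leq_trans hkl; apply: leq_addl.
  split; first exact: (den k l).
  move: ht ht' => /orP [/eqP ->|ht] /orP [/eqP ->|ht'].
  - rewrite par_t0l //; first by rewrite /inS eqxx.
    by apply: (Ssub l) => //; rewrite /inS eqxx.
  - rewrite par_t0l //; first by rewrite /inS eqxx.
    by apply: (Ssub l) => //; rewrite /inS ht' orbT.
  - rewrite par_t0r //; first by rewrite /inS eqxx.
    by apply: (Ssub k) => //; rewrite /inS ht orbT.
  - apply/orP; right; rewrite /inD; apply: (hrpar (k + l)%N k l) => //.
    by rewrite -(addn1 1) leq_add.
split.
  rewrite /inS negb_or eq_sym t0ne1 /= /inD normr1.
  apply/negP=> h; have := le_trans h hrlast.
  by rewrite lt_geF.
move=> k l h1 h3 hkl t t' ht ht'.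
have h2 : (k <= Lam - 1)%N by move: hkl h3; clear; lia.
have h4 : (l <= Lam - 1)%N by move: hkl h1; clear; lia.
exact: (den k l).
Qed.
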